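(* Let $A,B$ be closed linear relations in $X^2$ such that $\{A,B\}$ is a dual pair with $(A^* )_s|_{D(B)}=B_s$ and $(B^* )_s|_{D(A)}=A_s$. If $B^*(0)\cap N(A^* )=\{0\}$ and $A^*(0)\cap N(B^* )=\{0\}$, then $n(A^*,B)=n(B^*,A)$, where $n(A^*,B)=\dim(D(A^* )/D(B))$ and $n(B^*,A)=\dim(D(B^* )/D(A))$.
   Context: $X$ is a complex Hilbert space; linear relations are linear subspaces of $X^2=X\times X$, with domain $D(T)$, $N(T)=\{x:(x,0)\in T\}$, $T(0)=\{y:(0,y)\in T\}$. Adjoint: $T^*=\{(f,g):\langle g,x\rangle=\langle f,y\rangle\ \forall(x,y)\in T\}$. For closed $T$: $T_\infty=\{(0,y)\in T\}$ and $T_s=T\ominus T_\infty$ (orthogonal complement in $T$), an operator with $D(T_s)=D(T)$. Closed relations $A,B$ form a dual pair if $A\subset B^*$ (equivalently $B\subset A^*$). $(A^* )_s|_{D(B)}=B_s$ means the restriction of the operator $(A^* )_s$ to $D(B)$ is $B_s$. *)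

(* Defs.v *)
From mathcomp Require Import all_boot all_algebra.
From mathcomp Require Import reals.
From mathcomp.real_closed Require Import complex.
Import GRing.Theory Num.Theory.
Set Implicit Arguments. Unset Strict Implicit. Unset Printing Implicit Defensive.
Local Open Scope ring_scope.
Local Open Scope complex_scope.

Definition hnorm (R : realType) (X : lmodType R[i]) (ip : X -> X -> R[i]) (x : X) : R :=
  Num.sqrt (complex.Re (ip x x)).

Definition hconv (R : realType) (X : lmodType R[i]) (ip : X -> X -> R[i])
  (u : nat -> X) (l : X) : Prop :=
  forall e : R, 0 < e -> exists N : nat, forall n, (N <= n)%N -> hnorm ip (u n - l) < e.

Definition hcauchy (R : realType) (X : lmodType R[i]) (ip : X -> X -> R[i])
  (u : nat -> X) : Prop :=
  forall e : R, 0 < e -> exists N : nat, forall n m, (N <= n)%N -> (N <= m)%N ->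
    hnorm ip (u n - u m) < e.

Definition is_hilbert (R : realType) (X : lmodType R[i]) (ip : X -> X -> R[i]) : Prop :=
  [/\ (forall (a : R[i]) (x y z : X), ip (a *: x + y) z = a * ip x z + ip y z),
      (forall x y : X, ip y x = (ip x y)^*),
      (forall x : X, 0 <= ip x x),
      (forall x : X, ip x x = 0 -> x = 0) &
      (forall u : nat -> X, hcauchy ip u -> exists l, hconv ip u l)].

Definition linrel (X : Type) := X * X -> Prop.

Definition is_linrel (R : realType) (X : lmodType R[i]) (T : linrel X) : Prop :=
  T (0, 0) /\
  forall (a : R[i]) (p q : X * X), T p -> T q -> T (a *: p.1 + q.1, a *: p.2 + q.2).

(* closed in X^2 (product topology = sequential closedness in the norm) *)
Definition is_closed_rel (R : realType) (X : lmodType R[i]) (ip : X -> X -> R[i])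
  (T : linrel X) : Prop :=
  forall (u v : nat -> X) (x y : X), (forall n, T (u n, v n)) ->
    hconv ip u x -> hconv ip v y -> T (x, y).

Definition dom (X : Type) (T : linrel X) : X -> Prop := fun x => exists y, T (x, y).
Definition ker (X : zmodType) (T : linrel X) : X -> Prop := fun x => T (x, 0).
Definition mul0 (X : zmodType) (T : linrel X) : X -> Prop := fun y => T (0, y).

Definition adj (R : realType) (X : lmodType R[i]) (ip : X -> X -> R[i])
  (T : linrel X) : linrel X :=
  fun p => forall x y, T (x, y) -> ip p.2 x = ip p.1 y.

Definition rel_infty (X : zmodType) (T : linrel X) : linrel X :=
  fun p => T p /\ p.1 = 0.

(* T_s = T ⊖ T_infty : elements of T orthogonal in X^2 to T_infty
   (inner product on X^2: <(x,y),(x',y')> = <x,x'> + <y,y'>) *)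
Definition rel_s (R : realType) (X : lmodType R[i]) (ip : X -> X -> R[i])
  (T : linrel X) : linrel X :=
  fun p => T p /\ forall q, rel_infty T q -> ip p.1 q.1 + ip p.2 q.2 = 0.

Definition restr (X : Type) (T : linrel X) (D : X -> Prop) : linrel X :=
  fun p => T p /\ D p.1.

Definition rel_sub (X : Type) (S T : linrel X) : Prop := forall p, S p -> T p.

(* Equality of the dimensions of the quotient spaces V1/W1 and V2/W2
   (for subspaces W1 ⊂ V1, W2 ⊂ V2 of X): there is a linear map on V1 with
   values in V2 inducing a linear bijection V1/W1 -> V2/W2. *)
Definition quot_dim_eq (R : realType) (X : lmodType R[i])
  (V1 W1 V2 W2 : X -> Prop) : Prop :=
  exists f : X -> X,
    [/\ (forall x, V1 x -> V2 (f x)),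
        (forall (a : R[i]) x y, V1 x -> V1 y -> f (a *: x + y) = a *: f x + f y),
        (forall x, V1 x -> (W2 (f x) <-> W1 x)) &
        (forall y, V2 y -> exists x, V1 x /\ W2 (y - f x))].

(* Main.v *)
Require Import Defs.
From mathcomp Require Import all_boot all_order all_algebra.
From mathcomp Require Import reals.
From mathcomp.real_closed Require Import complex.
From mathcomp Require Import ring lra.
From mathcomp Require Import classical_sets.
From Stdlib Require Import IndefiniteDescription ClassicalEpsilon.
Import Order.TTheory GRing.Theory Num.Theory.
Local Open Scope ring_scope.
Local Open Scope complex_scope.
Set Implicit Arguments. Unset Strict Implicit.

Section Hil.
Variables (R : realType) (V : lmodType R[i]) (ip : V -> V -> R[i]).
Hypothesis Hh : is_hilbert ip.

Definition rr (x y : V) : R := complex.Re (ip x y).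
Definition qq (x : V) : R := rr x x.

Lemma ipL a x y z : ip (a *: x + y) z = a * ip x z + ip y z.
Proof. by case: Hh. Qed.
Lemma ipC x y : ip y x = conjc (ip x y).
Proof. by case: Hh => _ H. Qed.

Lemma ip0l z : ip 0 z = 0.
Proof.
have := ipL 1 0 0 z; rewrite scaler0 addr0 mul1r => /eqP.
by rewrite -subr_eq0 opprD addrA subrr sub0r oppr_eq0 => /eqP.
Qed.
Lemma ipDl x y z : ip (x + y) z = ip x z + ip y z.
Proof. by rewrite -[x in LHS]scale1r ipL mul1r. Qed.
Lemma ipZl a x z : ip (a *: x) z = a * ip x z.
Proof. by rewrite -[_ *: _]addr0 ipL ip0l addr0. Qed.
Lemma ipNl x z : ip (- x) z = - ip x z.
Proof. by rewrite -scaleN1r ipZl mulN1r. Qed.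
Lemma ipBl x y z : ip (x - y) z = ip x z - ip y z.
Proof. by rewrite ipDl ipNl. Qed.

Lemma conjD (u v : R[i]) : conjc (u + v) = conjc u + conjc v.
Proof. by case: u => a b; case: v => c d /=; rewrite opprD. Qed.
Lemma conjM (u v : R[i]) : conjc (u * v) = conjc u * conjc v.
Proof. by case: u => a b; case: v => c d /=; congr Complex; ring. Qed.
Lemma conjN (u : R[i]) : conjc (- u) = - conjc u.
Proof. by case: u. Qed.
Lemma conj0 : conjc (0 : R[i]) = 0.
Proof. by rewrite /= oppr0. Qed.

Lemma ipDr x y z : ip z (x + y) = ip z x + ip z y.
Proof. by rewrite ipC ipDl conjD -!ipC. Qed.
Lemma ipZr a x z : ip z (a *: x) = conjc a * ip z x.
Proof. by rewrite ipC ipZl conjM -ipC. Qed.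
Lemma ipNr x z : ip z (- x) = - ip z x.
Proof. by rewrite ipC ipNl conjN -ipC. Qed.
Lemma ipBr x y z : ip z (x - y) = ip z x - ip z y.
Proof. by rewrite ipDr ipNr. Qed.
Lemma ip0r z : ip z 0 = 0.
Proof. by rewrite ipC ip0l conj0. Qed.

Lemma ip_ge0 x : 0 <= ip x x.
Proof. by case: Hh => _ _ H _ _; apply: H. Qed.
Lemma ip_def x : ip x x = 0 -> x = 0.
Proof. by case: Hh => _ _ _ H _; apply: H. Qed.
Lemma ipxx x : ip x x = (qq x)%:C.
Proof.
have := ger0_Im (ip_ge0 x); rewrite /qq /rr; case: (ip x x) => a b /= ->.
by [].
Qed.
Lemma qq_ge0 x : 0 <= qq x.
Proof. by have := ip_ge0 x; rewrite ipxx lecR. Qed.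
Lemma qq_def x : qq x = 0 -> x = 0.
Proof. by move=> H; apply: ip_def; rewrite ipxx H. Qed.

Lemma rrDl x y z : rr (x + y) z = rr x z + rr y z.
Proof. by rewrite /rr ipDl; case: (ip x z); case: (ip y z). Qed.
Lemma rrDr x y z : rr z (x + y) = rr z x + rr z y.
Proof. by rewrite /rr ipDr; case: (ip z x); case: (ip z y). Qed.
Lemma rrNl x z : rr (- x) z = - rr x z.
Proof. by rewrite /rr ipNl; case: (ip x z). Qed.
Lemma rrNr x z : rr z (- x) = - rr z x.
Proof. by rewrite /rr ipNr; case: (ip z x). Qed.
Lemma rrZl (c : R) x z : rr (c%:C *: x) z = c * rr x z.
Proof. by rewrite /rr ipZl; case: (ip x z) => a b /=; rewrite mul0r subr0. Qed.
Lemma rrZr (c : R) x z : rr z (c%:C *: x) = c * rr z x.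
Proof. by rewrite /rr ipZr; case: (ip z x) => a b /=; rewrite oppr0 mul0r subr0. Qed.
Lemma rrC x y : rr y x = rr x y.
Proof. by rewrite /rr ipC; case: (ip x y). Qed.
Lemma rr0r x : rr x 0 = 0.
Proof. by rewrite /rr ip0r. Qed.


Lemma qq_expand z t (c : R) :
  qq (z - c%:C *: t) = qq z - 2 * c * rr z t + c ^+ 2 * qq t.
Proof.
rewrite /qq rrDl !rrDr rrNl !rrNr rrZl rrZr rrNl rrZl rrZr (rrC z t).
ring.
Qed.

Lemma quad_bound z t D : (forall c : R, D <= qq (z - c%:C *: t)) ->
  rr z t ^+ 2 <= (qq z - D) * qq t.
Proof.
move=> H.
have [/eqP Q0|Qn0] := boolP (qq t == 0).
  by rewrite (qq_def Q0) /qq !rr0r expr0n /= mulr0.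
have Qp : 0 < qq t by rewrite lt0r Qn0 qq_ge0.
set c := rr z t / qq t.
have cQ : c * qq t = rr z t by rewrite /c mulfVK.
have := H c; rewrite qq_expand => Hc.
have := ler_wpM2r (ltW Qp) Hc.
set r := rr z t; set Q := qq t; set X := qq z.
move: cQ; rewrite -/r -/Q => cQ.
have e1 : (X - 2 * c * r + c ^+ 2 * Q) * Q = X * Q - r ^+ 2.
  have -> : (X - 2 * c * r + c ^+ 2 * Q) * Q = X * Q - 2 * r * (c * Q) + (c * Q) ^+ 2 by ring.
  rewrite cQ; ring.
rewrite e1 => h; lra.
Qed.

Lemma sqrt_lt (a e : R) : 0 <= a -> 0 < e -> (Num.sqrt a < e) = (a < e ^+ 2).
Proof.
move=> a0 e0; rewrite -(@ltr_sqrt _ a (e ^+ 2)) ?exprn_gt0 // sqrtr_sqr ger0_norm //; exact: ltW.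
Qed.

Lemma inv_small (e : R) : 0 < e -> exists N : nat, forall n, (N <= n)%N -> n.+1%:R^-1 < e.
Proof.
move=> e0; exists (Num.bound (e^-1)) => n Nn.
have ei : 0 <= e^-1 by rewrite invr_ge0 ltW.
have h := archi_boundP ei.
rewrite -[e]invrK ltf_pV2 ?posrE ?invr_gt0 ?ltr0n //.
apply: lt_le_trans h _; rewrite ler_nat; exact: leqW.
Qed.

Lemma small_le0 (y K : R) : 0 <= K -> (forall e, 0 < e -> y <= K * e) -> y <= 0.
Proof.
move=> K0 H; apply/ler_addgt0Pr => e e0; rewrite add0r.
have K1 : 0 < K + 1 by lra.
have := H (e / (K + 1)) (divr_gt0 e0 K1).
have : K * (e / (K + 1)) <= e.
  rewrite mulrA ler_pdivrMr // ; nra.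
lra.
Qed.


Lemma hnormE x : hnorm ip x = Num.sqrt (qq x).
Proof. by []. Qed.

Lemma paral a b : qq (b - a) + qq (a + b) = 2 * qq a + 2 * qq b.
Proof.
rewrite /qq !rrDl !rrDr !rrNl !rrNr (rrC a b); ring.
Qed.

Lemma qqZ (c : R) v : qq (c%:C *: v) = c ^+ 2 * qq v.
Proof. by rewrite /qq rrZl rrZr mulrA expr2. Qed.

Lemma proj (S : V -> Prop) : S 0 ->
  (forall a u v, S u -> S v -> S (a *: u + v)) ->
  (forall u l, (forall n, S (u n)) -> hconv ip u l -> S l) ->
  forall x, exists s, S s /\ forall t, S t -> ip (x - s) t = 0.
Proof.
move=> S0 SL Scl x.
have SZ : forall a u, S u -> S (a *: u) by move=> a u Su; rewrite -[_ *: _]addr0; exact: SL.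
have SD : forall u v, S u -> S v -> S (u + v) by move=> u v Su Sv; rewrite -[u]scale1r; exact: SL.
pose E := fun y : R => exists s, S s /\ y = qq (x - s).
have hE : has_inf E.
  split; first by exists (qq (x - 0)); exists 0.
  by exists 0 => y [s [_ ->]]; exact: qq_ge0.
pose D := inf E.
have Dle : forall s, S s -> D <= qq (x - s).
  by move=> s Ss; apply: (ge_inf hE.2); exists s.
have approx : forall n : nat, exists s, S s /\ qq (x - s) < D + n.+1%:R^-1.
  move=> n; have np : 0 < n.+1%:R^-1 :> R by rewrite invr_gt0 ltr0n.
  have [y [s [Ss ->]] ys] := inf_adherent np hE.
  by exists s.
pose s n := proj1_sig (constructive_indefinite_description _ (approx n)).
have Hs : forall n, S (s n) /\ qq (x - s n) < D + n.+1%:R^-1.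
  by move=> n; rewrite /s; case: constructive_indefinite_description.
have par : forall n m, qq (s n - s m) <= 2 * (qq (x - s n) - D) + 2 * (qq (x - s m) - D).
  move=> n m.
  pose h : R := 2^-1.
  have hh : h%:C * (1 + 1) = 1 :> R[i].
    by rewrite /h /=; congr Complex; field.
  have Smid : S (h%:C *: (s n + s m)) by apply: SZ; apply: SD; case: (Hs n); case: (Hs m).
  have vid : x - h%:C *: (s n + s m) = h%:C *: ((x - s n) + (x - s m)).
    rewrite (addrACA x) -opprD scalerBr; congr (_ - _).
    by rewrite -[x in x + x]scale1r -scalerDl scalerA hh scale1r.
  have := Dle _ Smid; rewrite vid qqZ.
  have := paral (x - s n) (x - s m).
  have -> : x - s m - (x - s n) = s n - s m.
    by rewrite opprB addrC addrA subrK.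
  move=> e1 e2.
  have h4 : 4 * h ^+ 2 = 1 by rewrite /h; field.
  have e3 : 4 * D <= qq (x - s n + (x - s m)).
    by have := ler_wpM2l (ler0n R 4) e2; rewrite mulrA h4 mul1r.
  lra.
have cauchy : hcauchy ip s.
  move=> e e0.
  have e4 : 0 < e ^+ 2 / 4 by rewrite divr_gt0 ?exprn_gt0.
  have [N HN] := inv_small e4.
  exists N => n m Nn Nm.
  rewrite hnormE sqrt_lt ?qq_ge0 //.
  have := par n m; have := Hs n; have := Hs m; have := HN n Nn; have := HN m Nm.
  move=> a1 a2 [_ a3] [_ a4] a5.
  move: a1 a2 a3 a4 a5; set A := qq (s n - s m); set B := qq (x - s n); set C := qq (x - s m).
  set F := e ^+ 2. set i1 := m.+1%:R^-1; set i2 := n.+1%:R^-1. clearbody D. move=> *. lra.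
have [l hl] : exists l, hconv ip s l by case: Hh => _ _ _ _ C; apply: C.
have Sl : S l by apply: (Scl s) => // n; case: (Hs n).
have ortho : forall t, S t -> rr (x - l) t = 0.
  move=> t0 St0.
  set c := rr (x - l) t0.
  have key : forall n, c ^+ 2 <= 2 * ((qq (x - s n) - D) * qq t0) + 2 * (qq (s n - l) * qq t0).
    move=> n.
    have h1 : rr (x - s n) t0 ^+2 <= (qq (x - s n) - D) * qq t0.
      apply: quad_bound => c'; have := Dle (c'%:C *: t0 + s n) (SL _ _ _ St0 (Hs n).1).
      by rewrite opprD addrA addrAC.
    have h2 : rr (s n - l) t0 ^+2 <= (qq (s n - l) - 0) * qq t0.
      by apply: quad_bound => c'; exact: qq_ge0.
    have cE : c = rr (x - s n) t0 + rr (s n - l) t0 by rewrite /c -rrDl addrA subrK.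
    rewrite subr0 in h2; rewrite cE.
    set a := rr (x - s n) t0; set b := rr (s n - l) t0.
    have : (a + b) ^+ 2 <= 2 * a ^+ 2 + 2 * b ^+ 2.
      have := sqr_ge0 (a - b); rewrite !expr2 => hab; nra.
    lra.
  have Q0 := qq_ge0 t0.
  have c2 : c ^+ 2 <= 0.
    apply: (@small_le0 _ (4 * qq t0)); first by rewrite mulr_ge0.
    move=> e e0.
    have [N1 HN1] := inv_small e0.
    have se : 0 < Num.sqrt e by rewrite sqrtr_gt0.
    have [N2 HN2] := hl (Num.sqrt e) se.
    pose n := maxn N1 N2.
    have b1 := HN1 n (leq_maxl _ _).
    have b2 := HN2 n (leq_maxr _ _).
    rewrite hnormE ltr_sqrt // in b2.
    have b3 := (Hs n).2.
    have k := key n.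
    move: b1 b2 b3 k; set P := qq (x - s n); set Q := qq t0; set q' := qq (s n - l).
    set i := n.+1%:R^-1; clearbody D => b1 b2 b3 k.
    have : (P - D) * Q <= e * Q by apply: ler_wpM2r => //; lra.
    have : q' * Q <= e * Q by apply: ler_wpM2r => //; exact: ltW.
    lra.
  apply/eqP; rewrite -sqrf_eq0 eq_le c2 sqr_ge0 //.
exists l; split => // t St.
have r1 := ortho t St.
have r2 := ortho ('i *: t) (SZ _ _ St).
move: r1 r2; rewrite /rr ipZr; case: (ip (x - l) t) => a b /= ra rb.
have b0 : b = 0 by lra.
by rewrite ra b0.
Qed.

End Hil.

Section Prod.
Variables (R : realType) (X : lmodType R[i]) (ip : X -> X -> R[i]).
Hypothesis Hh : is_hilbert ip.

Definition ip2 (p q : X * X) : R[i] := ip p.1 q.1 + ip p.2 q.2.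

Lemma qq2 v : qq ip2 v = qq ip v.1 + qq ip v.2.
Proof. by rewrite /qq /rr /ip2; case: (ip v.1 v.1); case: (ip v.2 v.2). Qed.

Lemma qq2_ge0 v : 0 <= qq ip2 v.
Proof. by rewrite qq2 addr_ge0 // qq_ge0. Qed.

Lemma norm_fst v : hnorm ip v.1 <= hnorm ip2 v.
Proof. rewrite !hnormE qq2; apply: ler_wsqrtr; rewrite lerDl; exact: qq_ge0. Qed.
Lemma norm_snd v : hnorm ip v.2 <= hnorm ip2 v.
Proof. rewrite !hnormE qq2; apply: ler_wsqrtr; rewrite lerDr; exact: qq_ge0. Qed.

Lemma conv_fst (w : nat -> X * X) l : hconv ip2 w l -> hconv ip (fun n => (w n).1) l.1.
Proof.
move=> H e e0; have [N HN] := H e e0; exists N => n Nn.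
exact: le_lt_trans (norm_fst (w n - l)) (HN n Nn).
Qed.
Lemma conv_snd (w : nat -> X * X) l : hconv ip2 w l -> hconv ip (fun n => (w n).2) l.2.
Proof.
move=> H e e0; have [N HN] := H e e0; exists N => n Nn.
exact: le_lt_trans (norm_snd (w n - l)) (HN n Nn).
Qed.

Lemma hilbert2 : is_hilbert ip2.
Proof.
split.
- move=> a x y z; rewrite /ip2 /= !(ipL Hh); ring.
- move=> x y; rewrite /ip2 conjD -!(ipC Hh) //.
- move=> x; rewrite /ip2; apply: addr_ge0; exact: ip_ge0.
- move=> [x1 x2]; rewrite /ip2 /= => /eqP.
  rewrite paddr_eq0 ?(ip_ge0 Hh) // => /andP[/eqP h1 /eqP h2].
  by rewrite (ip_def Hh h1) (ip_def Hh h2).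
- move=> u Cu.
  have C1 : hcauchy ip (fun n => (u n).1).
    move=> e e0; have [N HN] := Cu e e0; exists N => n m Nn Nm.
    exact: le_lt_trans (norm_fst (u n - u m)) (HN n m Nn Nm).
  have C2 : hcauchy ip (fun n => (u n).2).
    move=> e e0; have [N HN] := Cu e e0; exists N => n m Nn Nm.
    exact: le_lt_trans (norm_snd (u n - u m)) (HN n m Nn Nm).
  have [l1 H1] : exists l, hconv ip (fun n => (u n).1) l by case: Hh => _ _ _ _ C; apply: C.
  have [l2 H2] : exists l, hconv ip (fun n => (u n).2) l by case: Hh => _ _ _ _ C; apply: C.
  exists (l1, l2) => e e0.
  have e2 : 0 < e / 2 by rewrite divr_gt0.
  have [N1 HN1] := H1 _ e2; have [N2 HN2] := H2 _ e2.
  exists (maxn N1 N2) => n Nn.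
  have b1 := HN1 n (leq_trans (leq_maxl _ _) Nn).
  have b2 := HN2 n (leq_trans (leq_maxr _ _) Nn).
  rewrite hnormE sqrt_lt ?qq2_ge0 // qq2 /=.
  move: b1 b2; rewrite !hnormE !sqrt_lt ?qq_ge0 // => b1 b2.
  have h4 : (e / 2) ^+ 2 = e ^+ 2 / 4 by field.
  rewrite h4 in b1 b2; apply: (lt_le_trans (ltrD b1 b2)). have : 0 <= e ^+ 2 by apply: sqr_ge0. lra.
Qed.

Lemma closed2 (T : linrel X) : is_closed_rel ip T ->
  forall w l, (forall n, T (w n)) -> hconv ip2 w l -> T l.
Proof.
move=> Tc w [l1 l2] Tw hl.
apply: (Tc (fun n => (w n).1) (fun n => (w n).2)).
- by move=> n; case: (w n) (Tw n).
- exact: (conv_fst hl).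
- exact: (conv_snd hl).
Qed.

End Prod.

Section Main.
Variables (R : realType) (X : lmodType R[i]) (ip : X -> X -> R[i]).
Hypothesis Hh : is_hilbert ip.

Lemma linP (T : linrel X) : is_linrel T -> forall a (u v : X * X), T u -> T v -> T (a *: u + v).
Proof. by move=> [_ H] a [u1 u2] [v1 v2]; apply: H. Qed.

Lemma lin_pair (T : linrel X) : is_linrel T ->
  forall a f g f' g', T (f, g) -> T (f', g') -> T (a *: f + f', a *: g + g').
Proof. by move=> [_ H] a f g f' g'; apply: (H a (f, g) (f', g')). Qed.

Lemma lin_sub (T : linrel X) : is_linrel T ->
  forall f g f' g', T (f, g) -> T (f', g') -> T (f - f', g - g').
Proof.
move=> HT f g f' g' h1 h2.
have := lin_pair HT (-1) h2 h1; rewrite !scaleN1r (addrC (- f')) (addrC (- g')) //.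
Qed.

Lemma lin_opp (T : linrel X) : is_linrel T -> forall f g, T (f, g) -> T (- f, - g).
Proof.
move=> HT f g h; have := lin_sub HT (proj1 HT) h; by rewrite !sub0r.
Qed.

Lemma adj_lin (T : linrel X) : is_linrel (adj ip T).
Proof.
split; first by move=> x y _ /=; rewrite (ip0l Hh) (ip0l Hh).
move=> a p q hp hq x y hT /=.
by rewrite !(ipL Hh) (hp x y hT) (hq x y hT).
Qed.

Lemma dom_lc (T : linrel X) : is_linrel T ->
  forall a x y, dom T x -> dom T y -> dom T (a *: x + y).
Proof.
move=> HT a x y [gx hx] [gy hy]; exists (a *: gx + gy); exact: lin_pair.
Qed.

Lemma dom_sub (T : linrel X) : is_linrel T ->
  forall x y, dom T x -> dom T y -> dom T (x - y).
Proof.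
move=> HT x y [gx hx] [gy hy]; exists (gx - gy); exact: lin_sub.
Qed.

Lemma dom0 (T : linrel X) : is_linrel T -> dom T 0.
Proof. by move=> [H _]; exists 0. Qed.

Lemma dual_sym (A B : linrel X) : rel_sub A (adj ip B) -> rel_sub B (adj ip A).
Proof.
move=> H [x y] hB u v hA /=.
have := H (u, v) hA x y hB; rewrite /= => e.
by rewrite (ipC Hh u y) -e -(ipC Hh).
Qed.

Definition Mset (A B : linrel X) (p : X * X) : Prop :=
  adj ip A p /\ forall q, B q -> ip2 ip p q = 0.

Lemma M_lc (A B : linrel X) a f g f' g' :
  Mset A B (f, g) -> Mset A B (f', g') -> Mset A B (a *: f + f', a *: g + g').
Proof.
move=> [h1 o1] [h2 o2]; split; first exact: (lin_pair (adj_lin A)).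
move=> q hq; rewrite /ip2 /= !(ipL Hh).
have := o1 q hq; have := o2 q hq; rewrite /ip2 /= => e2 e1.
by rewrite addrACA -mulrDr e1 e2 mulr0 addr0.
Qed.

Lemma M_sub (A B : linrel X) f g f' g' :
  Mset A B (f, g) -> Mset A B (f', g') -> Mset A B (f - f', g - g').
Proof.
move=> h1 h2; have := M_lc (-1) h2 h1.
by rewrite !scaleN1r (addrC (- f')) (addrC (- g')).
Qed.

Lemma phi (A B : linrel X) f g : Mset A B (f, g) -> Mset B A (- g, f).
Proof.
move=> [hA oB]; split.
  move=> x y hB /=; have := oB (x, y) hB; rewrite /ip2 /= (ipNl Hh) => e.
  by apply/eqP; rewrite -subr_eq0 opprK e.
move=> [x y] hA' ; rewrite /ip2 /= (ipNl Hh) (hA x y hA') /=.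
by rewrite addNr.
Qed.

Lemma Mop (A B : linrel X) :
  (forall x, mul0 (adj ip A) x -> ker (adj ip B) x -> x = 0) ->
  forall g, Mset A B (0, g) -> g = 0.
Proof.
move=> H g hM; apply: H; first by case: hM.
have [h _] := phi hM; have := lin_opp (adj_lin B) h.
by rewrite opprK oppr0.
Qed.


Lemma decomp (A B : linrel X) : is_linrel B -> is_closed_rel ip B ->
  rel_sub B (adj ip A) -> forall p, adj ip A p -> exists b, B b /\ Mset A B (p - b).
Proof.
move=> HB HBc HBA p hp.
have [b [Bb hb]] := proj (hilbert2 Hh) (proj1 HB) (linP HB) (closed2 Hh HBc) p.
exists b; split => //; split => //.
move: hp Bb {hb}; case: p => p1 p2; case: b => b1 b2 => hp Bb.
exact: (lin_sub (adj_lin A) hp (HBA _ Bb)).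
Qed.

Lemma conv0 (u : nat -> X) y : (forall n, u n = 0) -> hconv ip u y -> y = 0.
Proof.
move=> u0 H; apply: (qq_def Hh); apply/le_anti; rewrite qq_ge0 // andbT.
have -> : qq ip y = qq ip (0 - y) by rewrite sub0r /qq (rrNl Hh) (rrNr Hh) opprK.
apply: (@small_le0 _ _ 1) => // e e0.
have se : 0 < Num.sqrt e by rewrite sqrtr_gt0.
have [N HN] := H _ se; have := HN N (leqnn N).
by rewrite u0 hnormE ltr_sqrt // mul1r => /ltW.
Qed.

Lemma Bs_ex (B : linrel X) : is_linrel B -> is_closed_rel ip B ->
  forall f b, B (f, b) -> exists b', rel_s ip B (f, b').
Proof.
move=> HB HBc f b hb.
have S0 : rel_infty B 0 by split => //; exact: (proj1 HB).
have SL : forall a u v, rel_infty B u -> rel_infty B v -> rel_infty B (a *: u + v).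
  move=> a [u1 u2] [v1 v2] [hu /= e1] [hv /= e2]; subst u1 v1.
  split; last by rewrite /= scaler0 add0r.
  exact: (linP HB a hu hv).
have Scl : forall w l, (forall n, rel_infty B (w n)) -> hconv (ip2 ip) w l -> rel_infty B l.
  move=> w l hw hl; split.
    by apply: (closed2 Hh HBc) hl => n; case: (hw n).
  have := conv_fst Hh hl; apply: conv0 => n; by case: (hw n).
have [[d1 d2] [[Bd /= d10] hd]] := proj (hilbert2 Hh) S0 SL Scl (f, b).
subst d1.
exists (b - d2); split.
  by have := lin_sub HB hb Bd; rewrite subr0.
move=> q hq; have := hd q hq; by rewrite /ip2 /= subr0.
Qed.

Lemma Klem (A B : linrel X) : is_linrel B -> is_closed_rel ip B ->
  (forall p, restr (rel_s ip (adj ip A)) (dom B) p <-> rel_s ip B p) ->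
  forall f g, Mset A B (f, g) -> dom B f -> f = 0.
Proof.
move=> HB HBc Hr f g [hM oB] [b hb].
have [b' hs] := Bs_ex HB HBc hb.
have [[hAs orthA] _] := (Hr (f, b')).2 hs.
have hB' := proj1 hs.
have q0 : rel_infty (adj ip A) (0, g - b').
  split => //; have := lin_sub (adj_lin A) hM hAs; by rewrite subrr.
have e1 := orthA _ q0; rewrite /= (ip0r Hh) add0r (ipBr Hh) in e1.
have e2 := oB (f, b') hB'; rewrite /ip2 /= in e2.
apply: (ip_def Hh).
have e3 : ip g b' = ip b' b'.
  by rewrite (ipC Hh b' g) (subr0_eq e1) -(ipC Hh b' b').
rewrite e3 in e2; move/eqP: e2; rewrite paddr_eq0 ?(ip_ge0 Hh) //.
by case/andP => /eqP.
Qed.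

End Main.

Theorem proposition2p5 (R : realType) (X : lmodType R[i]) (ip : X -> X -> R[i])
  (A B : linrel X) :
  is_hilbert ip ->
  is_linrel A -> is_closed_rel ip A ->
  is_linrel B -> is_closed_rel ip B ->
  rel_sub A (adj ip B) ->
  (forall p, restr (rel_s ip (adj ip A)) (dom B) p <-> rel_s ip B p) ->
  (forall p, restr (rel_s ip (adj ip B)) (dom A) p <-> rel_s ip A p) ->
  (forall x, mul0 (adj ip B) x -> ker (adj ip A) x -> x = 0) ->
  (forall x, mul0 (adj ip A) x -> ker (adj ip B) x -> x = 0) ->
  quot_dim_eq (dom (adj ip A)) (dom B) (dom (adj ip B)) (dom A).
Proof.
move=> Hh HA HAc HB HBc HAB HrA HrB H9 H10.
have HBA := dual_sym Hh HAB.
pose P x g := exists m, dom B (x - m) /\ Mset ip A B (m, g).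
have Puniq : forall x g g', P x g -> P x g' -> g = g'.
  move=> x g g' [m [dm hm]] [m' [dm' hm']].
  have dmm : dom B (m - m').
    by have := dom_sub HB dm' dm; rewrite opprB addrC addrA subrK.
  have hmm := M_sub Hh hm hm'.
  have m0 := Klem Hh HB HBc HrA hmm dmm.
  rewrite m0 in hmm; have := Mop Hh H10 hmm; exact: subr0_eq.
have Pex : forall x, dom (adj ip A) x -> exists g, P x g.
  move=> x [y hy]; have [[b1 b2] [Bb hM]] := decomp Hh HB HBc HBA hy.
  exists (y - b2), (x - b1); split; last exact: hM.
  by rewrite subKr; exists b2.
pose F x := epsilon (inhabits (0 : X)) (P x).
have FP : forall x, dom (adj ip A) x -> P x (F x).
  by move=> x hx; apply: epsilon_spec; apply: Pex.
exists F; split.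
- move=> x hx; have [m [_ hm]] := FP x hx; have [hB _] := phi Hh hm.
  have d : dom (adj ip B) (- F x) by exists m.
  by have := dom_sub (adj_lin Hh B) (dom0 (adj_lin Hh B)) d; rewrite sub0r opprK.
- move=> a x y hx hy.
  have hxy : dom (adj ip A) (a *: x + y) := dom_lc (adj_lin Hh A) a hx hy.
  apply: (Puniq (a *: x + y)); first exact: FP.
  have [mx [dx hmx]] := FP x hx; have [my [dy hmy]] := FP y hy.
  exists (a *: mx + my); split; last first.
    exact (M_lc Hh a hmx hmy).
  have -> : a *: x + y - (a *: mx + my) = a *: (x - mx) + (y - my).
    by rewrite scalerBr opprD addrACA.
  exact (dom_lc HB a dx dy).
- move=> x hx; have [m [dm hm]] := FP x hx; split.
  + move=> dA; have hN := phi Hh hm.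
    have dA' : dom A (- F x) by have := dom_sub HA (dom0 HA) dA; rewrite sub0r.
    have g0 := Klem Hh HA HAc HrB hN dA'.
    rewrite g0 in hN; have m0 := Mop Hh H9 hN.
    by move: dm; rewrite m0 subr0.
  + move=> dB; have dm' : dom B m by have := dom_sub HB dB dm; rewrite subKr.
    have m0 := Klem Hh HB HBc HrA hm dm'.
    rewrite m0 in hm; have g0 := Mop Hh H10 hm.
    rewrite g0; exact: dom0 HA.
- move=> y [w hw]; have [[a1 a2] [Aa hN]] := decomp Hh HA HAc HAB hw.
  have hN' : Mset ip B A (y - a1, w - a2) := hN.
  have hM := phi Hh hN'.
  have hv : dom (adj ip A) (- (w - a2)) by exists (y - a1); case: hM.
  have Pv : P (- (w - a2)) (y - a1).
    by exists (- (w - a2)); split => //; rewrite subrr; exact: dom0 HB.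
  exists (- (w - a2)); split => //.
  rewrite (Puniq _ _ _ (FP _ hv) Pv) subKr; by exists a2.
Qed.
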